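(* Let $m\ge2$. Let $\mathcal K_{\rm sym}$ be the set of maps $K:\{0,1\}^m\to\{\pm1\}$ with $K(x_1,x_2,\dots,x_m)=K(1-x_1,x_2,\dots,x_m)$ for all $x$. Let $\mathcal Z$ be the set of pairs $(a,q)$, $q\in\{0,1\}^m$, $a=(a_1,\dots,a_m)$ with $a_i:X_i\to\{\pm1\}$, such that there is $K\in\mathcal K_{\rm sym}$ with $a_i=K|_{X_i}$ for all $i$, and $\prod_{x\in X_1}a_1(x)=(-1)^{q_1}$. Define $P(a|q)=2^{-(2^{m-1}-1)}$ if $(a,q)\in\mathcal Z$ and $P(a|q)=0$ otherwise. Then $P$ is a no-signalling correlation (for each $q$, $P(\cdot|q)$ is a probability distribution, and for each $i$, $\sum_{a_i}P(a|q)$ does not depend on $q_i$), and every $(a,q)$ with $P(a|q)>0$ wins $\mathrm{HC}_m$; consequently $P$ wins $\mathrm{HC}_m$ with probability $1$.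
   Context: The $m$-player Hypercube game $\mathrm{HC}_m$: the question $q=(q_1,\dots,q_m)\in\{0,1\}^m$ is uniformly random and player $i$ receives $q_i$. Player $i$ must answer a function $a_i:X_i\to\{+1,-1\}$ where $X_i=\{x\in\{0,1\}^m: x_i=q_i\}$. The players win iff (Parity) $\prod_{x\in X_1}a_1(x)=(-1)^{q_1}$ and $\prod_{x\in X_i}a_i(x)=1$ for all $i\ge2$; and (Consistency) $a_i(x)=a_j(x)$ for all $i\ne j$ and all $x\in X_i\cap X_j$. *)

(* Defs.v *)
From HB Require Import structures.
From mathcomp Require Import all_boot all_order all_algebra.
Set Implicit Arguments. Unset Strict Implicit. Unset Printing Implicit Defensive.
Import Order.TTheory GRing.Theory Num.Theory.
Local Open Scope ring_scope.

(* Players are indexed by 'I_m; player 1 of the paper is the index with value 0. *)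
Definition point (m : nat) := {ffun 'I_m -> bool}.
Definition question (m : nat) := {ffun 'I_m -> bool}.

(* Signs: the boolean b encodes (-1)^b, so false = +1 and true = -1. *)
Definition sgn (b : bool) : int := (-1) ^+ b.

Definition in_X m (i : 'I_m) (q : question m) (x : point m) : bool := x i == q i.

(* Player i's answer a_i : X_i -> {+-1} is
   encoded as a function on all of {0,1}^m whose values outside X_i are
   forced to +1 (false); see [well_formed].  This gives a bijection between
   the encoded answers with [well_formed q a] and the genuine answer tuples. *)
Definition answer (m : nat) := {ffun 'I_m -> {ffun point m -> bool}}.

Definition well_formed m (q : question m) (a : answer m) : bool :=
  [forall i, forall x, ~~ in_X i q x ==> ~~ a i x].

Definition flip1 m (x : point m) : point m :=
  [ffun j : 'I_m => if val j == 0%N then ~~ x j else x j].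

Definition Ksym m (K : {ffun point m -> bool}) : bool :=
  [forall x, K x == K (flip1 x)].

Definition inZ m (q : question m) (a : answer m) : bool :=
  [&& well_formed q a,
      [exists K : {ffun point m -> bool},
         Ksym K && [forall i, forall x, in_X i q x ==> (a i x == K x)]]
    & [forall i : 'I_m, (val i == 0%N) ==>
         ((\prod_(x : point m | in_X i q x) sgn (a i x)) == sgn (q i))]].

Definition P m (q : question m) (a : answer m) : rat :=
  if inZ q a then ((2 ^ (2 ^ (m - 1) - 1))%N%:R)^-1 else 0.

Definition wins m (q : question m) (a : answer m) : bool :=
  [forall i : 'I_m,
     (\prod_(x : point m | in_X i q x) sgn (a i x)) ==
       (if val i == 0%N then sgn (q i) else 1)]
  && [forall i : 'I_m, forall j : 'I_m, (i != j) ==>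
        [forall x, (in_X i q x && in_X j q x) ==> (a i x == a j x)]].

Definition upd m (a : answer m) (i : 'I_m) (f : {ffun point m -> bool}) : answer m :=
  [ffun j => if j == i then f else a j].

(* Main.v *)
Require Import Defs.
From HB Require Import structures.
From mathcomp Require Import all_boot all_order all_algebra.
Import Order.TTheory GRing.Theory Num.Theory.
Local Open Scope ring_scope.

Lemma sgn_addb a b : sgn (a (+) b) = sgn a * sgn b.
Proof. by case: a; case: b; rewrite /sgn /= ?expr0 ?expr1 ?mulr1 ?mul1r ?mulrNN. Qed.

Lemma sgn0 : sgn false = 1. Proof. by rewrite /sgn expr0. Qed.

Lemma sgn_inj : injective sgn.
Proof. by case; case; rewrite /sgn /= ?expr0 ?expr1. Qed.

Lemma prod_sgn (T : finType) (P : pred T) (F : T -> bool) :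
  \prod_(x | P x) sgn (F x) = sgn (\big[addb/false]_(x | P x) F x).
Proof. by rewrite (big_morph sgn sgn_addb sgn0). Qed.

Section S.
Context (m : nat) (i0 : 'I_m) (h0 : val i0 = 0%N).

Lemma flip1K : involutive (@flip1 m).
Proof.
move=> x; apply/ffunP=> j; rewrite !ffunE.
by case: (val j == 0%N); rewrite ?negbK.
Qed.

Lemma flip1_i0 (x : point m) : flip1 x i0 = ~~ x i0.
Proof. by rewrite ffunE h0. Qed.

Lemma flip1_ne (x : point m) j : j != i0 -> flip1 x j = x j.
Proof.
move=> hj; rewrite ffunE; case: eqP => // e.
by case/eqP: hj; apply: val_inj; rewrite /= e h0.
Qed.

Lemma flip1_eq (x w : point m) : (flip1 x == w) = (x == flip1 w).
Proof. by rewrite -{1}(flip1K w) (inj_eq (can_inj flip1K)). Qed.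

Definition ans (q : question m) (K : {ffun point m -> bool}) : answer m :=
  [ffun i => [ffun x => in_X i q x && K x]].

Definition par (q : question m) (K : {ffun point m -> bool}) : bool :=
  \big[addb/false]_(x | in_X i0 q x) K x == q i0.

Definition tog (w : point m) (K : {ffun point m -> bool}) : {ffun point m -> bool} :=
  [ffun x => if (x == w) || (x == flip1 w) then ~~ K x else K x].

Lemma Ksym_tog w K : Ksym K -> Ksym (tog w K).
Proof.
move=> /forallP sK; apply/forallP=> x; rewrite !ffunE flip1_eq.
rewrite (inj_eq (can_inj flip1K)) [(x == flip1 w) || _]orbC -(eqP (sK x)).
by [].
Qed.

Lemma togK w : involutive (tog w).
Proof.
by move=> K; apply/ffunP=> x; rewrite !ffunE; case: (_ || _); rewrite ?negbK.
Qed.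

Lemma xsum_tog (w : point m) (q : question m) (K : {ffun point m -> bool}) : w i0 = q i0 ->
  \big[addb/false]_(x | in_X i0 q x) tog w K x =
  ~~ \big[addb/false]_(x | in_X i0 q x) K x.
Proof.
move=> hw.
have hwX : in_X i0 q w by rewrite /in_X hw.
rewrite (bigD1 w) //= [in RHS](bigD1 w) //= ffunE eqxx /= addNb; congr (~~ (_ (+) _)).
apply: eq_bigr => x /andP[hx hne]; rewrite ffunE (negbTE hne) /=.
case: eqP => // e; move: hx; rewrite e /in_X flip1_i0 -hw.
by case: (w i0).
Qed.

Lemma Ksym_eq (b : bool) (K1 K2 : {ffun point m -> bool}) : Ksym K1 -> Ksym K2 ->
  (forall x : point m, x i0 = b -> K1 x = K2 x) -> K1 = K2.
Proof.
move=> /forallP s1 /forallP s2 H; apply/ffunP=> x.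
case hx: (x i0 == b); first by apply: H; apply/eqP.
rewrite (eqP (s1 x)) (eqP (s2 x)); apply: H.
by rewrite flip1_i0; move: hx; case: (x i0); case: b.
Qed.

Lemma inZP (q : question m) (a : answer m) :
  reflect (exists2 K, Ksym K && par q K & a = ans q K) (inZ q a).
Proof.
apply: (iffP and3P).
- case=> wf /existsP[K /andP[sK /forallP hK]] /forallP hp.
  have hKX : forall i x, in_X i q x -> a i x = K x.
    by move=> i x hx; move/forallP: (hK i) => /(_ x) /implyP /(_ hx) /eqP.
  exists K.
    rewrite sK /= /par; have := hp i0; rewrite h0 /= prod_sgn => /eqP /sgn_inj <-.
    by apply/eqP; apply: eq_bigr => x hx; rewrite hKX.
  apply/ffunP=> i; apply/ffunP=> x; rewrite !ffunE.
  case hx: (in_X i q x) => /=; first exact: hKX.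
  by move/forallP: wf => /(_ i) /forallP /(_ x) /implyP; rewrite hx => /(_ isT) /negbTE.
- case=> K /andP[sK hp] ->; split.
  + by apply/forallP=> i; apply/forallP=> x; rewrite !ffunE; case: (in_X i q x).
  + apply/existsP; exists K; rewrite sK /=.
    by apply/forallP=> i; apply/forallP=> x; rewrite !ffunE; case: (in_X i q x) => /=; rewrite ?eqxx.
  + apply/forallP=> i; apply/implyP=> /eqP hi.
    have -> : i = i0 by apply: val_inj; rewrite /= hi h0.
    rewrite prod_sgn; apply/eqP; congr sgn; move/eqP: hp => <-.
    by apply: eq_bigr => x hx; rewrite !ffunE hx.
Qed.


Lemma m_gt0 : (0 < m)%N.
Proof. by case: i0 h0 => /= k hk e; rewrite -e. Qed.

Lemma xsum_sym (i : 'I_m) (q : question m) (K : {ffun point m -> bool}) :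
  i != i0 -> Ksym K -> \big[addb/false]_(x | in_X i q x) K x = false.
Proof.
move=> hi /forallP sK.
rewrite (bigID (fun x : point m => x i0)) /=.
rewrite [X in _ (+) X](reindex_inj (can_inj flip1K)) /=.
have -> : \big[addb/false]_(x | in_X i q (flip1 x) && ~~ flip1 x i0) K (flip1 x)
        = \big[addb/false]_(x | in_X i q x && x i0) K x.
  apply: eq_big => x; first by rewrite /in_X flip1_ne // flip1_i0 negbK.
  by move=> _; rewrite (eqP (sK x)).
by rewrite addbb.
Qed.

Lemma inZ_wins (q : question m) (a : answer m) : inZ q a -> wins q a.
Proof.
case/inZP => K /andP[sK hp] ->; apply/andP; split.
- apply/forallP=> i; rewrite prod_sgn; case: (eqVneq i i0) => [->|hi].
  + rewrite h0 eqxx; apply/eqP; congr sgn; rewrite -(eqP hp).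
    by apply: eq_bigr => x hx; rewrite !ffunE hx.
  + have -> : (val i == 0%N) = false.
      apply/negbTE; apply: contra hi => /eqP e; apply/eqP/val_inj; by rewrite /= e h0.
    rewrite (eq_bigr (fun x => K x)); last by move=> x hx; rewrite !ffunE hx.
    by rewrite xsum_sym // sgn0.
- apply/forallP=> i; apply/forallP=> j; apply/implyP=> _; apply/forallP=> x.
  by apply/implyP=> /andP[hi hj]; rewrite !ffunE hi hj.
Qed.

Lemma upd_ans (a : answer m) i f (q : question m) K :
  upd a i f = ans q K -> forall j, j != i -> forall x, in_X j q x -> a j x = K x.
Proof.
move=> e j hj x hx; have := congr1 (fun b : answer m => b j x) e.
by rewrite /= !ffunE (negbTE hj) hx.
Qed.

Lemma K_unique (i : 'I_m) (q : question m) (K1 K2 : {ffun point m -> bool}) :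
  Ksym K1 -> Ksym K2 -> par q K1 -> par q K2 ->
  (forall j, j != i -> forall x, in_X j q x -> K1 x = K2 x) -> K1 = K2.
Proof.
move=> s1 s2 p1 p2 H.
case: (eqVneq i i0) => [ei|hi]; last first.
  apply: (Ksym_eq (q i0)) => // x hx; apply: (H i0); first by rewrite eq_sym.
  by rewrite /in_X hx.
subst i.
pose w : point m := [ffun j => if j == i0 then q i0 else ~~ q j].
have hoth : forall x, in_X i0 q x -> x != w -> K1 x = K2 x.
  move=> x hx hne.
  case: (boolP [exists j, (j != i0) && (x j == q j)]).
    by case/existsP => j /andP[hj hxj]; apply: (H j hj x hxj).
  rewrite negb_exists => /forallP hall; case/eqP: hne.
  apply/ffunP => j; rewrite ffunE; case: (eqVneq j i0) => [->|hj] /=.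
    exact/eqP.
  by have := hall j; rewrite hj /=; case: (x j); case: (q j).
have hwX : in_X i0 q w by rewrite /in_X ffunE eqxx.
have hw : K1 w = K2 w.
  move: p1 p2; rewrite /par (bigD1 w hwX) /= => p1; rewrite (bigD1 w hwX) /=; move: p1.
  have -> : \big[addb/false]_(x | in_X i0 q x && (x != w)) K1 x =
            \big[addb/false]_(x | in_X i0 q x && (x != w)) K2 x.
    by apply: eq_bigr => x /andP[hx hne]; apply: hoth.
  move=> /eqP e1 /eqP e2; apply: addIb; exact: (etrans e1 (esym e2)).
apply: (Ksym_eq (q i0)) => // x hx.
case: (eqVneq x w) => [->|hne] //; apply: hoth => //; by rewrite /in_X hx.
Qed.

Lemma upd_uniq (q : question m) (a : answer m) i f1 f2 :
  inZ q (upd a i f1) -> inZ q (upd a i f2) -> f1 = f2.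
Proof.
case/inZP=> K1 /andP[s1 p1] e1; case/inZP=> K2 /andP[s2 p2] e2.
have eK : K1 = K2.
  apply: (K_unique i q) => // j hj x hx.
  by rewrite -(upd_ans _ _ _ _ _ e1 _ hj _ hx) (upd_ans _ _ _ _ _ e2 _ hj _ hx).
have := congr1 (fun b : answer m => b i) e1; have := congr1 (fun b : answer m => b i) e2.
by rewrite /= !ffunE eqxx eK => -> ->.
Qed.

Lemma ex_transfer (i : 'I_m) (q q' : question m) (a : answer m) :
  (forall j, j != i -> q j = q' j) ->
  (exists f, inZ q (upd a i f)) -> exists f, inZ q' (upd a i f).
Proof.
move=> hq [f /inZP[K /andP[sK pK] e]].
have hpar : ~~ par q' K -> i = i0.
  move=> np; apply/eqP; apply: contraNT np => hi.
  have e0 : q i0 = q' i0 by apply: hq; rewrite eq_sym.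
  by move: pK; rewrite /par /in_X e0.
pose w : point m := [ffun j => if j == i0 then q' i0 else ~~ q j].
pose K' := if par q' K then K else tog w K.
have sK' : Ksym K' by rewrite /K'; case: ifP => _ //; apply: Ksym_tog.
have pK' : par q' K'.
  rewrite /K'; case: ifP => // /negbT np.
  rewrite /par xsum_tog; last by rewrite ffunE eqxx.
  by move: np; rewrite /par; case: (\big[addb/false]_(_ | _) _); case: (q' i0).
have agree : forall j, j != i -> ans q K j = ans q' K' j.
  move=> j hj; apply/ffunP=> x; rewrite !ffunE /in_X (hq j hj).
  rewrite /K'; case: ifP => // /negbT np; have ei := hpar np; subst i.
  rewrite ffunE; case hx: (x j == q' j) => //=.
  have -> : (x == w) = false.
    apply/negbTE; apply/negP => /eqP ew; move: hx.
    by rewrite ew ffunE (negbTE hj) -(hq j hj); case: (q j).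
  have -> : (x == flip1 w) = false.
    apply/negbTE; apply/negP => /eqP ew; move: hx.
    by rewrite ew flip1_ne // ffunE (negbTE hj) -(hq j hj); case: (q j).
  by [].
exists (ans q' K' i); apply/inZP; exists K'; first by rewrite sK' pK'.
apply/ffunP=> j; rewrite ffunE; case: (eqVneq j i) => [->|hj] //.
rewrite -agree //; have := congr1 (fun b : answer m => b j) e.
by rewrite /= ffunE (negbTE hj).
Qed.


Lemma card_H : #|[set x : point m | ~~ x i0]| = (2 ^ m.-1)%N.
Proof.
have hc : (#|[set x : point m | ~~ x i0]| + #|~: [set x : point m | ~~ x i0]| = 2 ^ m)%N.
  by rewrite cardsC card_ffun card_bool card_ord.
have e : ~: [set x : point m | ~~ x i0] = (@flip1 m) @: [set x : point m | ~~ x i0].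
  apply/setP=> x; rewrite !inE negbK; apply/idP/imsetP.
  - move=> hx; exists (flip1 x); first by rewrite inE flip1_i0 hx.
    by rewrite flip1K.
  - by case=> y; rewrite inE => hy ->; rewrite flip1_i0.
rewrite e card_imset in hc; last exact: can_inj flip1K.
have e2 : (2 ^ m = (2 ^ m.-1).*2)%N by rewrite -{1}(prednK m_gt0) expnS mul2n.
by rewrite e2 addnn in hc; apply: double_inj.
Qed.

Definition proj (K : {ffun point m -> bool}) : {ffun point m -> bool} :=
  [ffun x : point m => ~~ x i0 && K x].

Lemma card_Ksym : #|[set K : {ffun point m -> bool} | Ksym K]| = (2 ^ (2 ^ m.-1))%N.
Proof.
rewrite -(card_in_imset (f := proj)); last first.
  move=> K1 K2; rewrite !inE => s1 s2 e; apply: (Ksym_eq false) => // x hx.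
  by have := congr1 (fun g : {ffun point m -> bool} => g x) e; rewrite /= !ffunE hx.
rewrite -card_H -[in RHS]card_bool -(card_pffun_on false).
apply: eq_card => g; apply/imsetP/pffun_onP.
- case=> K _ ->; split; last by move=> b _; rewrite inE.
  apply/supportP => x; rewrite inE negbK ffunE => ->; by [].
- case=> /supportP hs _.
  exists [ffun x : point m => g (if x i0 then flip1 x else x)].
    rewrite inE; apply/forallP=> x; rewrite !ffunE h0 eqxx flip1K.
    by case: (x i0).
  apply/ffunP=> x; rewrite !ffunE; case hx: (x i0) => /=.
    by rewrite hs // inE hx.
  by [].
Qed.

Lemma card_A (q : question m) :
  #|[set K : {ffun point m -> bool} | Ksym K && par q K]| = (2 ^ (2 ^ m.-1 - 1))%N.
Proof.
have e1 := cardsID [set K : {ffun point m -> bool} | par q K]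
                   [set K : {ffun point m -> bool} | Ksym K].
have eA : [set K | Ksym K] :&: [set K | par q K] =
          [set K : {ffun point m -> bool} | Ksym K && par q K].
  by apply/setP=> K; rewrite !inE.
have eB : [set K | Ksym K] :\: [set K | par q K] =
          tog q @: [set K : {ffun point m -> bool} | Ksym K && par q K].
  apply/setP=> K; rewrite !inE; apply/andP/imsetP.
  - case=> np sK; exists (tog q K); last by rewrite togK.
    rewrite inE Ksym_tog //= /par xsum_tog //.
    by move: np; rewrite /par; case: (\big[addb/false]_(_ | _) _); case: (q i0).
  - case=> K0; rewrite inE => /andP[s0 p0] ->; split; last exact: Ksym_tog.
    rewrite /par xsum_tog //.
    by move: p0; rewrite /par; case: (\big[addb/false]_(_ | _) _); case: (q i0).
rewrite eA eB card_imset ?card_Ksym in e1; last exact: can_inj (togK q).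
have hp : (0 < 2 ^ m.-1)%N by rewrite expn_gt0.
move: e1; rewrite -(prednK hp) expnS addnn -mul2n => /eqP.
by rewrite eqn_pmul2l // subn1 /= => /eqP.
Qed.

Lemma card_inZ (q : question m) : #|[set a | inZ q a]| = (2 ^ (2 ^ m.-1 - 1))%N.
Proof.
have -> : [set a | inZ q a] = ans q @: [set K : {ffun point m -> bool} | Ksym K && par q K].
  apply/setP=> a; rewrite inE; apply/idP/imsetP.
  - by case/inZP=> K hK ->; exists K; rewrite ?inE.
  - by case=> K; rewrite inE => hK ->; apply/inZP; exists K.
rewrite card_in_imset ?card_A //.
move=> K1 K2; rewrite !inE => /andP[s1 _] /andP[s2 _] e.
apply: (Ksym_eq (q i0)) => // x hx.
have := congr1 (fun b : answer m => b i0 x) e; rewrite /= !ffunE /in_X hx eqxx.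
by [].
Qed.

Lemma sumP (q : question m) : \sum_a P q a = 1.
Proof.
rewrite /P -big_mkcond /= sumr_const.
rewrite (eq_card (B := [set a | inZ q a])); last by move=> a; rewrite inE.
rewrite card_inZ !subn1; set N := (2 ^ (2 ^ m.-1).-1)%N.
by rewrite -(mulr_natr ((N%:R)^-1)) mulVf // pnatr_eq0 -lt0n expn_gt0.
Qed.

Lemma marg (i : 'I_m) (q : question m) (a : answer m) :
  \sum_f P q (upd a i f) =
  if [exists f, inZ q (upd a i f)] then ((2 ^ (2 ^ (m - 1) - 1))%N%:R)^-1 else 0.
Proof.
case: existsP => [[f0 hf0]|hn].
  rewrite (bigD1 f0) //= /P hf0 big1 ?addr0 // => f hf.
  case: ifP => // hz; case/eqP: hf; exact: (upd_uniq _ _ _ _ _ hz hf0).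
apply: big1 => f _; rewrite /P; case: ifP => // hz; case: hn; by exists f.
Qed.

End S.

Theorem mainTheorem4 (m : nat) (hm : (2 <= m)%N) :
  (* P(.|q) is a probability distribution for every q *)
  (forall (q : question m) (a : answer m), 0 <= P q a) /\
  (forall q : question m, \sum_(a : answer m) P q a = 1) /\
  (* no-signalling: the marginal with player i summed out does not depend on q_i *)
  (forall (i : 'I_m) (q q' : question m),
     (forall j : 'I_m, j != i -> q j = q' j) ->
     forall a : answer m,
       \sum_(f : {ffun point m -> bool}) P q (upd a i f) =
       \sum_(f : {ffun point m -> bool}) P q' (upd a i f)) /\
  (* every (a,q) in the support wins *)
  (forall (q : question m) (a : answer m), 0 < P q a -> wins q a) /\
  (* winning probability (q uniform) is 1 *)
  (\sum_(q : question m) ((2 ^ m)%N%:R)^-1 *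
      (\sum_(a : answer m | wins q a) P q a) = 1 :> rat).
Proof.
pose i0 : 'I_m := Ordinal (ltnW hm).
have h0 : val i0 = 0%N by [].
have supp : forall (q : question m) (a : answer m), 0 < P q a -> wins q a.
  move=> q a; rewrite /P; case: ifP => [hz _|_]; first exact: (inZ_wins _ _ h0 _ _ hz).
  by rewrite ltxx.
split.
  by move=> q a; rewrite /P; case: ifP => _ //; rewrite invr_ge0 ler0n.
split; first exact: (sumP _ _ h0).
split.
  move=> i q q' hq a; rewrite !(marg _ _ h0).
  have -> : [exists f, inZ q (upd a i f)] = [exists f, inZ q' (upd a i f)].
    apply/existsP/existsP; first exact: (ex_transfer _ _ h0 _ _ _ _ hq).
    by apply: (ex_transfer _ _ h0 _ _ _ _ (fun j hj => esym (hq j hj))).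
  by [].
split; first exact: supp.
have e : forall q : question m, \sum_(a : answer m | wins q a) P q a = 1.
  move=> q; rewrite big_mkcond /= -(sumP _ _ h0 q); apply: eq_bigr => a _.
  rewrite /P; case hw: (wins q a); case hz: (inZ q a) => //.
  by have := inZ_wins _ _ h0 _ _ hz; rewrite hw.
rewrite (eq_bigr (fun _ => ((2 ^ m)%N%:R)^-1)); last by move=> q _; rewrite e mulr1.
rewrite sumr_const card_ffun card_bool card_ord -(mulr_natr (((2 ^ m)%N%:R)^-1)) mulVf //.
by rewrite pnatr_eq0 -lt0n expn_gt0.
Qed.
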